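(* There exists a finite constant $C=C(d)$ such that for any $\ell\in\mathbb N$ there exists a flow $\phi_\ell$ connecting the point mass at $0$ to $q_\ell$, with support contained in $\Lambda_{2\ell-1}$, such that \[ \sum_{z\in\mathbb Z^d,b\in\mathcal B}\phi_\ell(z;b)^2\le Cg_d(\ell),\qquad\sum_{z\in\mathbb Z^d,b\in\mathcal B}|\phi_\ell(z;b)|\le C\ell. \]
   Context: $\mathcal B=\{e_1,\dots,e_d\}$ is the canonical basis of $\mathbb Z^d$. $\Lambda_\ell=\{z\in\mathbb Z^d:0\le z_i\le\ell-1,\ i=1,\dots,d\}$; $p_\ell(z)=\ell^{-d}\mathbf 1(z\in\Lambda_\ell)$; $q_\ell=p_\ell*p_\ell$, i.e. $q_\ell(z)=\sum_yp_\ell(y)p_\ell(z-y)$. A flow is a function $\phi:\mathbb Z^d\times\mathcal B\to\mathbb R$; its support is contained in $\Lambda$ if $\phi(x;b)\ne0$ implies $\{x,x+b\}\subseteq\Lambda$. A flow $\phi$ connects a measure $p$ to a measure $q$ if $p(z)-q(z)=\sum_{b\in\mathcal B}\big(\phi(z;b)-\phi(z-b;b)\big)$ for all $z\in\mathbb Z^d$. $g_d(\ell)=\ell,\log\ell,1$ for $d=1$, $d=2$, $d\ge3$. *)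

(* Defs.v *)
From HB Require Import structures.
From mathcomp Require Import all_boot all_order all_algebra.
From mathcomp Require Import all_classical all_reals all_analysis.
Set Implicit Arguments. Unset Strict Implicit. Unset Printing Implicit Defensive.
Import Order.TTheory GRing.Theory Num.Theory.
Local Open Scope ring_scope.

Definition pt (d : nat) := {ffun 'I_d -> int}.

Definition addb d (z : pt d) (i : 'I_d) : pt d := [ffun j => z j + (j == i)%:Z].
Definition subb d (z : pt d) (i : 'I_d) : pt d := [ffun j => z j - (j == i)%:Z].
Definition subp d (z y : pt d) : pt d := [ffun j => z j - y j].

Definition inbox d (l : nat) (z : pt d) : bool := [forall i, (0 <= z i) && (z i < l%:Z)].

Definition box_pt d l (y : {ffun 'I_d -> 'I_l}) : pt d := [ffun j => (nat_of_ord (y j))%:Z].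

Definition p_l (R : realType) d (l : nat) (z : pt d) : R :=
  if inbox l z then ((l%:R) ^+ d)^-1 else 0.

(* q_l = p_l * p_l; the sum over y in Z^d reduces to y in Lambda_l = supp p_l. *)
Definition q_l (R : realType) d (l : nat) (z : pt d) : R :=
  \sum_(y : {ffun 'I_d -> 'I_l}) p_l R l (box_pt y) * p_l R l (subp z (box_pt y)).

Definition delta0 (R : realType) d (z : pt d) : R := if z == [ffun => 0] then 1 else 0.

Definition flow (R : realType) d := pt d -> 'I_d -> R.

Definition support_in (R : realType) d (l : nat) (phi : flow R d) : Prop :=
  forall z i, phi z i != 0 -> inbox l z && inbox l (addb z i).

Definition connects (R : realType) d (p q : pt d -> R) (phi : flow R d) : Prop :=
  forall z : pt d, p z - q z = \sum_(i < d) (phi z i - phi (subb z i) i).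

Definition g_d (R : realType) (d l : nat) : R :=
  if d == 1%N then l%:R else if d == 2%N then ln (l%:R) else 1.

(* Main.v *)
Require Import Defs.
From HB Require Import structures.
From mathcomp Require Import all_boot all_order all_algebra.
From mathcomp Require Import all_classical all_reals all_analysis.
From mathcomp Require Import zify ring lra.
Import Order.TTheory GRing.Theory Num.Theory.
Local Open Scope ring_scope.
Set Implicit Arguments. Unset Strict Implicit. Unset Printing Implicit Defensive.


Definition stepflow (R : realType) d (nu nu' F : int -> R) (z : pt d) (i : 'I_d) : R :=
  \prod_(j < d) (if (j < i)%N then nu' (z j) else if j == i then F (z j) else nu (z j)).

Lemma step_div (R : realType) d (nu nu' F : int -> R) (z : pt d) :
  (forall x, F x - F (x - 1) = nu x - nu' x) ->
  \sum_(i < d) (stepflow nu nu' F z i - stepflow nu nu' F (subb z i) i)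
  = \prod_(j < d) nu (z j) - \prod_(j < d) nu' (z j).
Proof.
move=> hF.
pose G (n : nat) := \prod_(j < d) (if (j < n)%N then nu' (z j) else nu (z j)).
have GE : forall n, G n = \prod_(j < d) (if (j < n)%N then nu' (z j) else nu (z j)) by [].
have -> : \prod_(j < d) nu (z j) = G 0%N by apply: eq_bigr => j _.
have -> : \prod_(j < d) nu' (z j) = G d by apply: eq_bigr => j _; rewrite ltn_ord.
have -> : G 0%N - G d = \sum_(i < d) (G i - G i.+1).
  rewrite -opprB -(@telescope_sumr _ 0%N d G (leq0n d)) big_mkord -sumrN.
  by apply: eq_bigr => k _; rewrite opprB.
apply: eq_bigr => i _.
rewrite /stepflow !GE [X in X - _ = _](bigD1 i) // [X in _ - X = _](bigD1 i) // [X in _ = X - _](bigD1 i) // [X in _ = _ - X](bigD1 i) //=.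
rewrite ltnn eqxx ltnSn.
have -> : subb z i i = z i - 1 by rewrite /subb ffunE eqxx.
have e1 : \prod_(j < d | j != i) (if (j < i)%N then nu' (subb z i j) else if j == i then F (subb z i j) else nu (subb z i j))
  = \prod_(j < d | j != i) (if (j < i)%N then nu' (z j) else if j == i then F (z j) else nu (z j)).
  by apply: eq_bigr => j hj; rewrite /subb ffunE (negbTE hj) subr0.
rewrite e1.
have e2 : \prod_(j < d | j != i) (if (j < i)%N then nu' (z j) else if j == i then F (z j) else nu (z j))
  = \prod_(j < d | j != i) (if (j < i)%N then nu' (z j) else nu (z j)).
  by apply: eq_bigr => j hj; rewrite (negbTE hj).
have e3 : \prod_(j < d | j != i) (if (j < i.+1)%N then nu' (z j) else nu (z j))
  = \prod_(j < d | j != i) (if (j < i)%N then nu' (z j) else nu (z j)).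
  apply: eq_bigr => j hj; rewrite ltnS leq_eqVlt.
  by have -> : (nat_of_ord j == nat_of_ord i) = false by apply/negbTE.
by rewrite e2 e3 -!mulrBl hF.
Qed.

Definition tri (R : realType) (m : nat) (x : int) : R :=
  \sum_(y < m) (if (0 <= x - (nat_of_ord y)%:Z) && (x - (nat_of_ord y)%:Z < m%:Z) then (m%:R ^+ 2)^-1 else 0).

Lemma tri_ge0 (R : realType) m x : 0 <= tri R m x.
Proof. by apply: sumr_ge0 => y _; case: ifP => // _; rewrite invr_ge0 exprn_ge0. Qed.

Lemma tri_le (R : realType) m x : (0 < m)%N -> tri R m x <= (m%:R)^-1.
Proof.
move=> hm; apply: le_trans (_ : \sum_(y < m) (m%:R ^+ 2 : R)^-1 <= _).
  apply: ler_sum => y _; case: ifP => // _; rewrite invr_ge0 exprn_ge0 //.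
rewrite sumr_const card_ord.
have hm0 : (m%:R : R) != 0 by rewrite pnatr_eq0 -lt0n.
suff -> : (m%:R ^+ 2 : R)^-1 *+ m = m%:R^-1 by [].
by rewrite -mulr_natr; field.
Qed.

Lemma tri_out (R : realType) m x : ~~ ((0 <= x) && (x < (2 * m - 1)%N%:Z)) -> tri R m x = 0.
Proof.
move=> hx; apply: big1 => y _; case: ifP => // /andP[h1 h2]; exfalso.
move: hx => /negP; apply; have := ltn_ord y; lia.
Qed.

Lemma sum_ind_nat (R : realType) (a b L : nat) (c : R) : (a + b <= L)%N ->
  \sum_(0 <= x < L) (if (a <= x < a + b)%N then c else 0) = c *+ b.
Proof.
move=> h.
rewrite (big_cat_nat (n := a)) //=; last by lia.
rewrite (big_cat_nat (m := a) (n := a + b)) //=; last by lia.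
have e1 : \sum_(0 <= x < a) (if (a <= x < a + b)%N then c else 0) = 0.
  by rewrite big_nat_cond big1 // => x /andP[hx _]; case: ifP => //; lia.
have e3 : \sum_(a + b <= x < L) (if (a <= x < a + b)%N then c else 0) = 0.
  by rewrite big_nat_cond big1 // => x /andP[hx _]; case: ifP => //; lia.
have e2 : \sum_(a <= x < a + b) (if (a <= x < a + b)%N then c else 0) = c *+ b.
  rewrite big_nat_cond (eq_bigr (fun _ => c)); last by move=> x /andP[hx _]; rewrite hx.
  by rewrite -big_nat_cond sumr_const_nat; congr (_ *+ _); lia.
by rewrite e1 e2 e3 add0r addr0.
Qed.

Lemma tri_sum (R : realType) m L : (0 < m)%N -> (2 * m - 1 <= L)%N ->
  \sum_(x < L) tri R m (x%:Z) = 1.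
Proof.
move=> hm hL; rewrite /tri exchange_big /=.
rewrite (eq_bigr (fun _ => (m%:R ^+ 2 : R)^-1 *+ m)).
  rewrite sumr_const card_ord.
  have hm0 : (m%:R : R) != 0 by rewrite pnatr_eq0 -lt0n.
  suff -> : (m%:R ^+ 2 : R)^-1 *+ m *+ m = 1 by [].
  by rewrite -mulrnA -(mulr_natr ((m%:R^+2 : R)^-1)) natrM -expr2 mulVf // expf_neq0.
move=> y _; rewrite -(@sum_ind_nat _ y m L ((m%:R ^+ 2 : R)^-1)); last by have := ltn_ord y; lia.
rewrite big_mkord; apply: eq_bigr => x _; congr (if _ then _ else _).
apply/idP/idP; [move/andP=> [h1 h2]|move=> h]; first by apply/andP; split; lia.
apply/andP; split; lia.
Qed.

Lemma tri1 (R : realType) x : tri R 1 x = (x == 0)%:R.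
Proof.
rewrite /tri big_ord1 /= subr0 expr1n invr1.
case: (x =P 0) => [->|hx] //=.
case: ifP => // /andP[h1 h2]; exfalso; apply: hx; lia.
Qed.

Definition cdfL (R : realType) (L : nat) (nu : int -> R) (x : int) : R :=
  \sum_(y < L | ((nat_of_ord y)%:Z <= x)) nu (nat_of_ord y)%:Z.

Lemma cdf_step (R : realType) L (nu : int -> R) x :
  (forall x, ~~ ((0 <= x) && (x < L%:Z)) -> nu x = 0) ->
  cdfL L nu x - cdfL L nu (x - 1) = nu x.
Proof.
move=> hnu; rewrite /cdfL !(big_mkcond (fun y : 'I_L => _ <= _)) -sumrB.
rewrite (eq_bigr (fun y : 'I_L => if (nat_of_ord y)%:Z == x then nu x else 0)); last first.
  move=> y _; case: ifP => h1; case: ifP => h2; case: eqP => h3; rewrite ?subrr ?subr0 //;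
    try (exfalso; lia); by rewrite h3.
case: (boolP ((0 <= x) && (x < L%:Z))) => hx; last first.
  by rewrite (hnu x hx) big1 // => y _; case: ifP.
have hn : (`|x|%N < L)%N by lia.
rewrite (bigD1 (Ordinal hn)) //= big1 ?addr0.
  by rewrite ifT //; apply/eqP; lia.
move=> y hy; case: ifP => // /eqP h; exfalso; move/eqP: hy; apply; apply/val_inj => /=; lia.
Qed.

Lemma cdf_neg (R : realType) L (nu : int -> R) x : x < 0 -> cdfL L nu x = 0.
Proof. by move=> hx; rewrite /cdfL big_pred0 // => y; lia. Qed.

Lemma cdf_full (R : realType) L (nu : int -> R) x :
  (forall y : 'I_L, x < (nat_of_ord y)%:Z -> nu (nat_of_ord y)%:Z = 0) ->
  cdfL L nu x = \sum_(y < L) nu (nat_of_ord y)%:Z.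
Proof.
move=> h; rewrite /cdfL big_mkcond; apply: eq_bigr => y _; case: ifP => // hy.
by rewrite h //; lia.
Qed.

Lemma cdf_bounds (R : realType) L (nu : int -> R) x :
  (forall x, 0 <= nu x) -> \sum_(y < L) nu (nat_of_ord y)%:Z = 1 ->
  0 <= cdfL L nu x <= 1.
Proof.
move=> h0 h1; apply/andP; split; first by apply: sumr_ge0.
rewrite -h1 [X in _ <= X](bigID (fun y : 'I_L => (nat_of_ord y)%:Z <= x)) /= lerDl.
by apply: sumr_ge0.
Qed.

Lemma q_l_prod (R : realType) d l (z : pt d) : (0 < l)%N ->
  q_l R l z = \prod_(j < d) tri R l (z j).
Proof.
move=> hl; rewrite /q_l /tri bigA_distr_bigA /=; apply: eq_bigr => y _.
have hl0 : (l%:R : R) != 0 by rewrite pnatr_eq0 -lt0n.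
have -> : p_l R l (box_pt y) = (l%:R ^+ d)^-1.
  rewrite /p_l; case: ifP => // /negP []; apply/forallP => j.
  by rewrite /box_pt ffunE; have := ltn_ord (y j); lia.
rewrite /p_l; case: ifP => [/forallP hin|/negP hout].
  rewrite (eq_bigr (fun _ => (l%:R ^+ 2 : R)^-1)); last first.
    by move=> j _; have := hin j; rewrite /subp /box_pt !ffunE => ->.
  by rewrite prodr_const card_ord -invfM -exprD exprVn -exprM; congr (_ ^+ _)^-1; lia.
have [j hj] : exists j, ~~ ((0 <= subp z (box_pt y) j) && (subp z (box_pt y) j < l%:Z)).
  apply/existsP; rewrite -negb_forall; exact/negP.
rewrite mulr0 (bigD1 j) //= ifF ?mul0r //; apply/negbTE.
by move: hj; rewrite /subp /box_pt !ffunE.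
Qed.

Lemma delta0_prod (R : realType) d (z : pt d) :
  delta0 R z = \prod_(j < d) tri R 1 (z j).
Proof.
rewrite /delta0 (eq_bigr (fun j => ((z j == 0)%:R : R))); last by move=> j _; rewrite tri1.
case: eqP => [->|hz].
  by rewrite big1 // => j _; rewrite ffunE eqxx.
case: (pickP (fun j => z j != 0)) => [j hj|h]; last first.
  exfalso; apply: hz; apply/ffunP => j; rewrite ffunE; apply/eqP.
  by have := h j => /= /negbFE.
by rewrite (bigD1 j) //= (negbTE hj) mul0r.
Qed.

Lemma energy_bound (R : realType) (T : finType) (n : nat) (f : 'I_n -> T -> R) (M : 'I_n -> R) :
  (forall k t, `|f k t| <= M k) ->
  \sum_(t : T) (\sum_(k < n) f k t) ^+ 2
    <= 2 * \sum_(k' < n) (M k' * \sum_(k < n | (k <= k')%N) \sum_(t : T) `|f k t|).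
Proof.
move=> hM.
pose A (k k' : 'I_n) (t : T) := if (k <= k')%N then `|f k t| * M k' else 0.
apply: le_trans (_ : \sum_t \sum_k \sum_k' (A k k' t + A k' k t) <= _).
  apply: ler_sum => t _; rewrite expr2 mulr_suml; apply: ler_sum => k _.
  rewrite mulr_sumr; apply: ler_sum => k' _.
  apply: le_trans (ler_norm _) _; rewrite normrM /A.
  have h0 : 0 <= `|f k t| * M k'.
    by rewrite mulr_ge0 // (le_trans _ (hM k' t)).
  have h0' : 0 <= `|f k' t| * M k.
    by rewrite mulr_ge0 // (le_trans _ (hM k t)).
  case: (leqP k k') => hkk'.
    case: ifP => _; last by rewrite addr0 ler_wpM2l.
    by rewrite -[X in X <= _]addr0 lerD // ler_wpM2l.
  rewrite ifT; last by lia.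
  by rewrite add0r mulrC ler_wpM2l.
have -> : \sum_t \sum_k \sum_k' (A k k' t + A k' k t)
   = 2 * \sum_t \sum_k \sum_k' A k k' t.
  rewrite mulr_sumr; apply: eq_bigr => t _.
  under eq_bigr do rewrite big_split.
  rewrite big_split /= [X in _ + X]exchange_big /= -mulr2n mulr_natl.
  by [].
rewrite ler_pM2l // le_eqVlt; apply/orP; left; apply/eqP.
rewrite exchange_big /=.
under eq_bigr do rewrite exchange_big /=.
rewrite exchange_big /=; apply: eq_bigr => k' _.
rewrite mulr_sumr [in RHS]big_mkcond /=; apply: eq_bigr => k _.
rewrite /A /=; case: ifP => h.
  by rewrite mulr_sumr; apply: eq_bigr => t _; rewrite mulrC.
by rewrite big1.
Qed.

Definition mk (l K k : nat) : nat := if (k <= K)%N then (2 ^ k)%N else l.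

Lemma mk_facts l k : (0 < l)%N ->
  let K := trunc_log 2 l in
  [/\ (0 < mk l K k)%N, (mk l K k <= l)%N, (mk l K k <= mk l K k.+1)%N
    & (k <= K)%N -> mk l K k = (2 ^ k)%N /\ (mk l K k.+1 <= 2 ^ k.+1)%N].
Proof.
move=> hl K.
have hK1 : (2 ^ K <= l)%N by apply: trunc_logP.
have hK2 : (l < 2 ^ K.+1)%N by apply: trunc_log_ltn.
rewrite /mk; split.
- by case: ifP => _; rewrite ?expn_gt0.
- by case: ifP => // h; apply: leq_trans hK1; apply: leq_pexp2l.
- case: ifP => h1; case: ifP => h2 //.
  + by apply: leq_pexp2l.
  + by have -> : k = K by lia.
  + lia.
- move=> hk; rewrite hk; split => //; case: ifP => // h.
  have -> : k = K by lia.
  exact: ltnW.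
Qed.

Lemma mk0 l : mk l (trunc_log 2 l) 0 = 1%N.
Proof. by []. Qed.

Lemma mkK l : mk l (trunc_log 2 l) (trunc_log 2 l).+1 = l.
Proof. by rewrite /mk ltnn. Qed.

Definition nuk (R : realType) (l k : nat) : int -> R := tri R (mk l (trunc_log 2 l) k).

Definition Fk (R : realType) (l k : nat) (x : int) : R :=
  cdfL (2 * l - 1)%N (nuk R l k) x - cdfL (2 * l - 1)%N (nuk R l k.+1) x.

Lemma nuk_out (R : realType) l k x : (0 < l)%N ->
  ~~ ((0 <= x) && (x < (2 * l - 1)%N%:Z)) -> nuk R l k x = 0.
Proof.
move=> hl hx; have [h1 h2 _ _] := mk_facts k hl.
by apply: tri_out; move: hx; apply: contra => /andP[a b]; apply/andP; split => //; lia.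
Qed.

Lemma nuk_ge0 (R : realType) l k x : 0 <= nuk R l k x.
Proof. exact: tri_ge0. Qed.

Lemma nuk_sum (R : realType) l k : (0 < l)%N ->
  \sum_(y < (2 * l - 1)%N) nuk R l k (nat_of_ord y)%:Z = 1.
Proof.
move=> hl; have [h1 h2 _ _] := mk_facts k hl.
by apply: tri_sum => //; lia.
Qed.

Lemma nuk_le (R : realType) l k x : (0 < l)%N ->
  `|nuk R l k.+1 x| <= ((mk l (trunc_log 2 l) k)%:R)^-1 /\
  `|nuk R l k x| <= ((mk l (trunc_log 2 l) k)%:R)^-1.
Proof.
move=> hl; have [h1 h2 h3 _] := mk_facts k hl; have [h1' _ _ _] := mk_facts k.+1 hl.
rewrite !ger0_norm ?nuk_ge0 //; split; last by apply: tri_le.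
apply: le_trans (tri_le _ _ h1') _.
by rewrite lef_pV2 ?ler_nat // posrE ltr0n.
Qed.

Lemma Fk_step (R : realType) l k x : (0 < l)%N ->
  Fk R l k x - Fk R l k (x - 1) = nuk R l k x - nuk R l k.+1 x.
Proof.
move=> hl; rewrite /Fk.
rewrite -(cdf_step x (fun y => @nuk_out R l k y hl)) -(cdf_step x (fun y => @nuk_out R l k.+1 y hl)).
ring.
Qed.

Lemma Fk_norm (R : realType) l k x : (0 < l)%N -> `|Fk R l k x| <= 1.
Proof.
move=> hl; rewrite /Fk.
have /andP[a1 a2] := cdf_bounds x (@nuk_ge0 R l k) (nuk_sum R k hl).
have /andP[b1 b2] := cdf_bounds x (@nuk_ge0 R l k.+1) (nuk_sum R k.+1 hl).
rewrite ler_norml; apply/andP; split; lra.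
Qed.

Lemma Fk_neg (R : realType) l k x : x < 0 -> Fk R l k x = 0.
Proof. by move=> hx; rewrite /Fk !cdf_neg // subrr. Qed.

Lemma Fk_hi (R : realType) l k x : (0 < l)%N ->
  (2 * mk l (trunc_log 2 l) k.+1 - 2)%N%:Z <= x -> Fk R l k x = 0.
Proof.
move=> hl hx; have [h1 h2 h3 _] := mk_facts k hl; have [h1' _ _ _] := mk_facts k.+1 hl.
rewrite /Fk !cdf_full ?nuk_sum ?subrr // => y hy; apply: tri_out; lia.
Qed.

Definition fk (R : realType) d (l k : nat) (z : pt d) (i : 'I_d) : R :=
  stepflow (nuk R l k) (nuk R l k.+1) (Fk R l k) z i.

Definition phiF (R : realType) d (l : nat) : flow R d :=
  fun z i => \sum_(k < (trunc_log 2 l).+1) fk R l k z i.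

Lemma phi_connects (R : realType) d l : (0 < l)%N ->
  connects (@delta0 R d) (q_l R l) (phiF R l).
Proof.
move=> hl z; rewrite /phiF.
under eq_bigr do rewrite -sumrB.
rewrite exchange_big /=.
rewrite (eq_bigr (fun k : 'I_(trunc_log 2 l).+1 => \prod_(j < d) nuk R l k (z j) - \prod_(j < d) nuk R l k.+1 (z j))); last first.
  by move=> k _; apply: step_div => x; apply: Fk_step.
pose G (k : nat) := \prod_(j < d) nuk R l k (z j).
have GE : forall k, G k = \prod_(j < d) nuk R l k (z j) by [].
rewrite (eq_bigr (fun k : 'I_(trunc_log 2 l).+1 => G k - G k.+1)) //.
have tel : \sum_(k < (trunc_log 2 l).+1) (G k - G k.+1) = G 0%N - G (trunc_log 2 l).+1.
  rewrite -opprB -(@telescope_sumr _ 0%N (trunc_log 2 l).+1 G (leq0n _)) big_mkord -sumrN.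
  by apply: eq_bigr => k _; rewrite opprB.
rewrite tel !GE /nuk mk0 mkK.
by rewrite delta0_prod q_l_prod.
Qed.

Lemma phi_support (R : realType) d l : (0 < l)%N ->
  support_in (2 * l - 1) (phiF R (d:=d) l).
Proof.
move=> hl z i hne.
case: (pickP (fun k : 'I_(trunc_log 2 l).+1 => fk R l k z i != 0)) => [k hk|h]; last first.
  move: hne; rewrite /phiF big1 ?eqxx // => k _.
  by apply/eqP; move: (h k) => /= /negbFE.
have hfac : forall j : 'I_d,
    (if (j < i)%N then nuk R l k.+1 (z j) else if j == i then Fk R l k (z j) else nuk R l k (z j)) != 0.
  move=> j; apply/negP => /eqP hj; move: hk; rewrite /fk /stepflow (bigD1 j) //= hj mul0r.
  by rewrite eqxx.
have [h1 h2 h3 h4] := mk_facts k hl; have [h1' h2' _ _] := mk_facts k.+1 hl.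
have hj : forall j : 'I_d, j != i -> (0 <= z j) && (z j < (2 * l - 1)%N%:Z).
  move=> j hji; have := hfac j; rewrite (negbTE hji).
  case: (boolP ((0 <= z j) && (z j < (2 * l - 1)%N%:Z))) => // hout.
  by case: ifP => _; rewrite nuk_out // eqxx.
have hi : (0 <= z i) && (z i + 1 < (2 * l - 1)%N%:Z).
  have := hfac i; rewrite ltnn eqxx => hF.
  apply/andP; split.
    by rewrite leNgt; apply/negP => hneg; move/eqP: hF; apply; apply: Fk_neg.
  rewrite ltNge; apply/negP => hge; move/eqP: hF; apply; apply: Fk_hi => //; lia.
apply/andP; split; apply/forallP => j; case: (eqVneq j i) => [->|hji].
- move: hi => /andP[a b]; apply/andP; split => //; lia.
- exact: hj.
- rewrite /addb ffunE eqxx; move: hi => /andP[a b]; apply/andP; split => //; lia.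
- by rewrite /addb ffunE (negbTE hji) addr0; exact: hj.
Qed.

Lemma fk_norm (R : realType) d l k (z : pt d) i : (0 < l)%N ->
  `|fk R l k z i| <= (((mk l (trunc_log 2 l) k)%:R)^-1) ^+ d.-1.
Proof.
move=> hl; set c := ((mk l (trunc_log 2 l) k)%:R : R)^-1.
rewrite /fk /stepflow normr_prod.
apply: le_trans (_ : \prod_(j < d) (if j == i then 1 else c) <= _).
  apply: ler_prod => j _; rewrite normr_ge0 /=.
  have [a b] := nuk_le R k (z j) hl.
  case: ifP => hlt; case: eqP => heq //.
  - by rewrite heq ltnn in hlt.
  - exact: Fk_norm.
rewrite (bigD1 i) //= eqxx mul1r.
rewrite (eq_bigr (fun _ => c)); last by move=> j /negbTE ->.
by rewrite prodr_const cardC1 card_ord.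
Qed.

Lemma sum_if (R : realType) (T : finType) (b : bool) (f g : T -> R) :
  \sum_(x : T) (if b then f x else g x) = if b then \sum_(x : T) f x else \sum_(x : T) g x.
Proof. by case: b. Qed.

Lemma fk_L1 (R : realType) d l k : (0 < l)%N ->
  \sum_(y : {ffun 'I_d -> 'I_(2 * l - 1)}) \sum_(i < d) `|fk R l k (box_pt y) i|
    <= d%:R * (2 * (mk l (trunc_log 2 l) k.+1)%:R).
Proof.
move=> hl; set m' := mk l (trunc_log 2 l) k.+1.
have [h1 h2 h3 h4] := mk_facts k hl; have [h1' h2' _ _] := mk_facts k.+1 hl.
rewrite exchange_big /=.
apply: le_trans (_ : \sum_(i < d) 2 * (m'%:R : R) <= _); last by rewrite sumr_const card_ord [X in _ <= X]mulr_natl.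
apply: ler_sum => i _.
pose G (j : 'I_d) (x : 'I_(2 * l - 1)) := `|(if (j < i)%N then nuk R l k.+1 (nat_of_ord x)%:Z else if j == i then Fk R l k (nat_of_ord x)%:Z else nuk R l k (nat_of_ord x)%:Z)|.
rewrite (eq_bigr (fun y : {ffun 'I_d -> 'I_(2 * l - 1)} => \prod_(j < d) G j (y j))); last first.
  by move=> y _; rewrite /fk /stepflow normr_prod; apply: eq_bigr => j _; rewrite /box_pt ffunE.
rewrite -bigA_distr_bigA /= (bigD1 i) //= [X in _ * X]big1 ?mulr1; last first.
  move=> j hji; rewrite /G /=.
  under eq_bigr do rewrite (fun_if (fun u : R => `|u|)) (fun_if (fun u : R => `|u|)).
  rewrite !sum_if (negbTE hji); case: ifP => _.
    by rewrite (eq_bigr (fun x : 'I_(2 * l - 1) => nuk R l k.+1 (nat_of_ord x)%:Z)) ?nuk_sum // => x _; rewrite ger0_norm ?nuk_ge0.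
  by rewrite (eq_bigr (fun x : 'I_(2 * l - 1) => nuk R l k (nat_of_ord x)%:Z)) ?nuk_sum // => x _; rewrite ger0_norm ?nuk_ge0.
rewrite /G /= ltnn eqxx.
apply: le_trans (_ : \sum_(x < 2 * l - 1) (if (0 <= x < 0 + (2 * m' - 1))%N then (1 : R) else 0) <= _).
  apply: ler_sum => x _; case: ifP => hx; first exact: Fk_norm.
  by rewrite Fk_hi ?normr0 //; lia.
rewrite -(big_mkord xpredT (fun x => if (0 <= x < 0 + (2 * m' - 1))%N then (1 : R) else 0)).
rewrite sum_ind_nat; last by lia.
by rewrite -natrM ler_nat; lia.
Qed.

Lemma geo_nat (n k' : nat) :
  (\sum_(k < n) (if (k <= k')%N then 2 ^ k else 0) < 2 ^ k'.+1)%N.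
Proof.
suff h : forall n, (\sum_(k < n) (if (k <= k')%N then 2 ^ k else 0)).+1 = (2 ^ minn n k'.+1)%N.
  by rewrite -ltnS h ltnS leq_pexp2l // geq_minr.
elim=> [|m IH]; first by rewrite big_ord0.
rewrite big_ord_recr /= -addSn IH; case: ifP => h.
  rewrite (minn_idPl (_ : m <= k'.+1)%N); last by lia.
  rewrite (minn_idPl (_ : m.+1 <= k'.+1)%N); last by lia.
  by rewrite expnS; lia.
rewrite (minn_idPr (_ : k'.+1 <= m)%N); last by lia.
rewrite (minn_idPr (_ : k'.+1 <= m.+1)%N); last by lia.
by rewrite addn0.
Qed.

Lemma geoR (R : realType) (n : nat) :
  \sum_(k < n) (((2 ^ k)%N%:R : R)^-1) <= 2.
Proof.
suff h : forall n, \sum_(k < n) (((2 ^ k)%N%:R : R)^-1) = 2 - 2 * ((2 ^ n)%N%:R)^-1.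
  rewrite h lerBlDr lerDl; apply: mulr_ge0 => //; rewrite invr_ge0 ler0n //.
elim=> [|m IH]; first by rewrite big_ord0 expn0 invr1 mulr1 subrr.
rewrite big_ord_recr /= IH expnS natrM.
have h2 : ((2 ^ m)%N%:R : R) != 0 by rewrite pnatr_eq0 expn_eq0.
by field.
Qed.

Lemma S_bound (R : realType) d l (k : nat) : (0 < l)%N -> (k <= trunc_log 2 l)%N ->
  \sum_(y : {ffun 'I_d -> 'I_(2 * l - 1)}) \sum_(i < d) `|fk R l k (box_pt y) i|
    <= 4 * d%:R * (2 ^ k)%N%:R.
Proof.
move=> hl hk; apply: le_trans (fk_L1 R d k hl) _.
have [_ _ _ h4] := mk_facts k hl; have [_ h5] := h4 hk.
have : ((mk l (trunc_log 2 l) k.+1)%:R : R) <= 2 * (2 ^ k)%N%:R.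
  by rewrite -natrM ler_nat -expnS.
have : (0 : R) <= d%:R by [].
nra.
Qed.

Lemma geo_sumR (R : realType) (n k' : nat) :
  \sum_(k < n | (k <= k')%N) ((2 ^ k)%N%:R : R) <= 2 * (2 ^ k')%N%:R.
Proof.
rewrite big_mkcond /=.
rewrite (eq_bigr (fun k : 'I_n => ((if (k <= k')%N then 2 ^ k else 0)%N%:R : R))); last first.
  by move=> k _; case: ifP.
rewrite -natr_sum -natrM ler_nat -expnS; apply: ltnW; exact: geo_nat.
Qed.

Lemma energy_E (R : realType) d l : (0 < l)%N ->
  \sum_(y : {ffun 'I_d -> 'I_(2 * l - 1)}) \sum_(i < d) (phiF R l (box_pt y) i) ^+ 2
  <= 16 * d%:R * \sum_(k' < (trunc_log 2 l).+1)
        ((((2 ^ k')%N%:R : R)^-1) ^+ d.-1 * (2 ^ k')%N%:R).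
Proof.
move=> hl; set K := trunc_log 2 l.
rewrite pair_bigA /=.
have EB := @energy_bound R _ K.+1
  (fun (k : 'I_K.+1) (p : {ffun 'I_d -> 'I_(2 * l - 1)} * 'I_d) => fk R l k (box_pt p.1) p.2)
  (fun k : 'I_K.+1 => (((mk l K k)%:R : R)^-1) ^+ d.-1)
  (fun k p => @fk_norm R d l k (box_pt p.1) p.2 hl).
apply: le_trans EB _.
rewrite mulr_sumr [X in _ <= X]mulr_sumr; apply: ler_sum => k' _.
have hk' : (k' <= K)%N by have := ltn_ord k'; lia.
have [_ _ _ h4] := mk_facts k' hl; have [-> _] := h4 hk'.
set M := (((2 ^ k')%N%:R : R)^-1) ^+ d.-1.
have hM : 0 <= M by rewrite exprn_ge0 // invr_ge0.
have hS : \sum_(k < K.+1 | (k <= k')%N) \sum_(p : {ffun 'I_d -> 'I_(2 * l - 1)} * 'I_d) `|fk R l k (box_pt p.1) p.2|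
    <= 8 * d%:R * (2 ^ k')%N%:R.
  apply: le_trans (_ : \sum_(k < K.+1 | (k <= k')%N) 4 * d%:R * (2 ^ k)%N%:R <= _).
    apply: ler_sum => k hk; rewrite -(pair_bigA _ (fun (y : {ffun 'I_d -> 'I_(2 * l - 1)}) (i : 'I_d) => `|fk R l k (box_pt y) i|)) /=; apply: S_bound => //; lia.
  rewrite -mulr_sumr.
  have := geo_sumR R K.+1 k'.
  have : (0 : R) <= d%:R by [].
  nra.
have : 0 <= M * (2 ^ k')%N%:R by rewrite mulr_ge0.
nra.
Qed.

Lemma L1_bound (R : realType) d l : (0 < l)%N ->
  \sum_(y : {ffun 'I_d -> 'I_(2 * l - 1)}) \sum_(i < d) `|phiF R l (box_pt y) i|
  <= 8 * d%:R * l%:R.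
Proof.
move=> hl; set K := trunc_log 2 l.
apply: le_trans (_ : \sum_(y : {ffun 'I_d -> 'I_(2 * l - 1)}) \sum_(i < d)
    \sum_(k < K.+1) `|fk R l k (box_pt y) i| <= _).
  by apply: ler_sum => y _; apply: ler_sum => i _; apply: ler_norm_sum.
under eq_bigr do rewrite exchange_big /=.
rewrite exchange_big /=.
apply: le_trans (_ : \sum_(k < K.+1) 4 * d%:R * ((2 ^ k)%N%:R : R) <= _).
  apply: ler_sum => k _; apply: S_bound => //; have := ltn_ord k; lia.
rewrite -mulr_sumr.
have hg := geo_sumR R K.+1 K.
rewrite (eq_bigl (fun _ => true)) in hg; last by move=> k; have := ltn_ord k; lia.
have hK : ((2 ^ K)%N%:R : R) <= l%:R by rewrite ler_nat; apply: trunc_logP.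
have : (0 : R) <= d%:R by [].
nra.
Qed.

Lemma phi_l1 (R : realType) d (z : pt d) i : phiF R 1 z i = 0.
Proof.
rewrite /phiF trunc_log1 big_ord1 /fk /stepflow (bigD1 i) //= ltnn eqxx.
by rewrite /Fk /nuk trunc_log1 /mk /= subrr mul0r.
Qed.

Unset Implicit Arguments.

(* Sums over Z^d x B are taken over Lambda_(2l-1) x B, which contains the support. *)
Theorem lemma3p2 (R : realType) (d : nat) (hd : (0 < d)%N) :
  exists C : R, forall l : nat, (0 < l)%N ->
    exists phi : flow R d,
      [/\ connects (@delta0 R d) (q_l R l) phi,
          support_in (2 * l - 1) phi,
          \sum_(y : {ffun 'I_d -> 'I_(2 * l - 1)}) \sum_(i < d) (phi (box_pt y) i) ^+ 2
            <= C * g_d R d l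
        & \sum_(y : {ffun 'I_d -> 'I_(2 * l - 1)}) \sum_(i < d) `|phi (box_pt y) i|
            <= C * l%:R].
Proof.
have ln2_gt0 : 0 < ln (2 : R) by apply: ln_gt0; lra.
have ln2_lt2 : ln (2 : R) < 2 by apply: ln_sublinear; lra.
set w := (ln (2 : R))^-1.
have hw : w * ln 2 = 1 by rewrite mulVf // gt_eqF.
have hw0 : 0 < w by rewrite invr_gt0.
have hd0 : (1 : R) <= d%:R by rewrite ler1n.
have hw2 : 1 / 2 <= w by nra.
exists (64 * d%:R * w) => l hl; exists (phiF R l); split.
- exact: phi_connects.
- exact: phi_support.
- case: (eqVneq l 1%N) => [hl1|hl1].
    subst l; rewrite (eq_bigr (fun _ => 0)); last first.
      by move=> y _; rewrite big1 // => i _; rewrite phi_l1 expr0n.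
    rewrite sumr_const mul0rn; apply: mulr_ge0; first by nra.
    rewrite /g_d; case: ifP => _; first by rewrite ler0n.
    by case: ifP => _ //; rewrite -[1%:R]/(1 : R) ln1.
  have hl2 : (2 <= l)%N by lia.
  apply: le_trans (energy_E R d hl) _.
  set K := trunc_log 2 l.
  have hK : ((2 ^ K)%N%:R : R) <= l%:R by rewrite ler_nat; apply: trunc_logP.
  have hg : \sum_(k < K.+1) ((2 ^ k)%N%:R : R) <= 2 * (2 ^ K)%N%:R.
    apply: le_trans (geo_sumR R K.+1 K); rewrite le_eqVlt; apply/orP; left; apply/eqP.
    by apply: eq_bigl => k; have := ltn_ord k; lia.
  have [d1|dn1] := eqVneq d 1%N.
    subst d; rewrite /g_d eqxx /=.
    under eq_bigr do rewrite expr0 mul1r.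
    have hl0 : (0:R) <= l%:R by [].
    have hwl : l%:R / 2 <= w * l%:R by nra.
    rewrite -[1%:R]/(1 : R) in hd0 *. nra.
  have [d2|dn2] := eqVneq d 2%N.
    subst d; rewrite /g_d /=.
    rewrite (eq_bigr (fun _ => 1)); last first.
      by move=> k _; rewrite expr1 mulVf // pnatr_eq0 expn_eq0.
    rewrite sumr_const card_ord.
    have hKl : (K%:R : R) * ln 2 <= ln l%:R.
      have h0 : ln ((2 ^ K)%N%:R : R) <= ln l%:R.
        by rewrite ler_ln ?posrE ?ltr0n ?expn_gt0.
      by move: h0; rewrite natrX lnXn // => h; rewrite mulr_natl.
    have hll : ln (2 : R) <= ln l%:R.
      by rewrite ler_ln ?posrE ?ltr0n ?ler_nat //; lia.
    have hwl : 0 <= w * ln l%:R by rewrite mulr_ge0 //; nra.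
    rewrite -[K.+1%:R]natr1.
    have h3 : w * ((K%:R + 1) * ln 2) <= w * (2 * ln l%:R).
      by apply: ler_wpM2l; [exact: ltW | nra].
    have h4 : w * ((K%:R + 1) * ln 2) = K%:R + 1 by rewrite mulrC -mulrA [ln 2 * w]mulrC hw mulr1.
    rewrite -[2%:R]/(2 : R); lra.
  rewrite /g_d (negbTE dn1) (negbTE dn2) mulr1.
  have hd3 : (3 <= d)%N by lia.
  have hE : \sum_(k' < K.+1) ((((2 ^ k')%N%:R : R)^-1) ^+ d.-1 * (2 ^ k')%N%:R) <= 2.
    apply: le_trans (geoR R K.+1); apply: ler_sum => k _.
    set x := (((2 ^ k)%N%:R : R)^-1).
    have hx0 : 0 < x by rewrite invr_gt0 ltr0n expn_gt0.
    have hx1 : x <= 1 by rewrite invr_le1 ?ler1n ?expn_gt0 ?unitf_gt0 ?ltr0n ?expn_gt0.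
    have -> : d.-1 = (d.-2).+1 by lia.
    rewrite exprSr -mulrA mulVf ?pnatr_eq0 ?expn_eq0 // mulr1.
    have -> : d.-2 = (d - 3).+1 by lia.
    rewrite exprS; apply: le_trans (_ : x * 1 <= _); last by rewrite mulr1.
    by apply: ler_wpM2l; [exact: ltW | exact: exprn_ile1 (ltW hx0) hx1].
  nra.
- apply: le_trans (L1_bound R d hl) _.
  have : (0 : R) <= d%:R * l%:R by rewrite mulr_ge0.
  nra.
Qed.
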